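(* Let $X$ be a rearrangement invariant space on $[0,1]$ which is an interpolation space between $L^1([0,1])$ and $L^\infty([0,1])$, and let $(w_{n_k})$ be a $q$-lacunary sequence of Walsh functions with $q>1$. Then $(w_{n_k})$ is a basic sequence in $X$, i.e. there is a constant $K>0$ such that $\|\sum_{k=1}^Ma_kw_{n_k}\|_X\le K\|\sum_{k=1}^Na_kw_{n_k}\|_X$ for all $M<N$ and all real $a_1,\dots,a_N$.
   Context: $m$ is Lebesgue measure. A Banach function space $X$ over $[0,1]$ is a linear space of measurable functions with a complete norm such that $g\in X$, $|f|\le|g|$ a.e. imply $f\in X$, $\|f\|_X\le\|g\|_X$; it is rearrangement invariant (r.i.) if equimeasurable functions have equal norms (and membership). $X$ is an interpolation space between $L^1$ and $L^\infty$ if $L^\infty\subset X\subset L^1$ continuously and every linear operator bounded on $L^1$ and on $L^\infty$ is bounded on $X$. Rademacher functions $r_k(t)=\mathrm{sign}\sin(2^k\pi t)$; Walsh functions (Paley numbering) $w_0=1$, $w_k=r_1^{a_1}\cdots r_n^{a_n}$ for $k=\sum_{i=1}^na_i2^{i-1}$, $a_i\in\{0,1\}$. $(w_{n_k})$ is $q$-lacunary if $n_{k+1}/n_k\ge q$ for all $k$. *)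

(* Defs.v *)
From mathcomp Require Import all_boot all_order all_algebra.
From mathcomp Require Import all_classical all_reals all_analysis.
Set Implicit Arguments. Unset Strict Implicit. Unset Printing Implicit Defensive.
Import Order.TTheory GRing.Theory Num.Theory.
Import numFieldNormedType.Exports.
Local Open Scope classical_set_scope.
Local Open Scope ring_scope.

Section Defs.
Variable R : realType.
Notation mu := (@lebesgue_measure R).
Notation I01 := (`[0%R, 1%R]%classic : set R).

Definition ae_eq01 (f g : R -> R) : Prop :=
  {ae mu, forall x, I01 x -> f x = g x}.

Definition ae_bdd01 (f : R -> R) (M : R) : Prop :=
  {ae mu, forall x, I01 x -> `|f x| <= M}.

Definition L1norm (f : R -> R) : \bar R :=
  (\int[mu]_(x in I01) (`|f x|)%:E)%E.

(* A Banach function (lattice) norm on measurable functions on [0,1];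
   the space X is {f measurable on [0,1] | rho f < +oo}. *)
Definition inX (rho : (R -> R) -> \bar R) (f : R -> R) : Prop :=
  measurable_fun I01 f /\ (rho f < +oo)%E.

Definition banach_function_norm (rho : (R -> R) -> \bar R) : Prop :=
  [/\ (forall f : R -> R, measurable_fun I01 f -> (0 <= rho f)%E),
      (forall f : R -> R, measurable_fun I01 f -> (rho f = 0%E <-> ae_eq01 f (fun=> 0))),
      (forall (a : R) f, measurable_fun I01 f ->
          rho (fun x => a * f x) = (`|a|%:E * rho f)%E),
      (forall f g : R -> R, measurable_fun I01 f -> measurable_fun I01 g ->
          (rho (fun x => (f x + g x)%R) <= rho f + rho g)%E) &
      (forall f g : R -> R, measurable_fun I01 f -> measurable_fun I01 g ->
          {ae mu, forall x, I01 x -> (`|f x| <= `|g x|)%R} -> (rho f <= rho g)%E)] /\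
      (forall u : nat -> R -> R, (forall n, inX rho (u n)) ->
         (forall e : R, 0 < e -> exists N, forall m n, (N <= m)%N -> (N <= n)%N ->
              (rho (fun x => (u n x - u m x)%R) <= e%:E)%E) ->
         exists f, inX rho f /\
           (forall e : R, 0 < e -> exists N, forall n, (N <= n)%N ->
              (rho (fun x => (u n x - f x)%R) <= e%:E)%E)).

Definition rearrangement_invariant (rho : (R -> R) -> \bar R) : Prop :=
  forall f g : R -> R, measurable_fun I01 f -> measurable_fun I01 g ->
    (forall t : R, mu (I01 `&` [set x | t < `|f x|]) =
                   mu (I01 `&` [set x | t < `|g x|])) ->
    rho f = rho g.

(* T (defined on L^1[0,1] = L^1 + L^oo) is linear (modulo a.e. equality) *)
Definition ae_linear (T : (R -> R) -> (R -> R)) : Prop :=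
  forall (f g : R -> R) (a b : R), mu.-integrable I01 (EFin \o f) ->
    mu.-integrable I01 (EFin \o g) ->
    ae_eq01 (T (fun x => a * f x + b * g x)) (fun x => a * T f x + b * T g x).

Definition bounded_L1 (T : (R -> R) -> (R -> R)) : Prop :=
  exists C : R, forall f, mu.-integrable I01 (EFin \o f) ->
    mu.-integrable I01 (EFin \o T f) /\ (L1norm (T f) <= C%:E * L1norm f)%E.

Definition bounded_Linf (T : (R -> R) -> (R -> R)) : Prop :=
  exists C : R, forall f (M : R), mu.-integrable I01 (EFin \o f) ->
    ae_bdd01 f M -> ae_bdd01 (T f) (C * M).

Definition bounded_on_X (rho : (R -> R) -> \bar R) (T : (R -> R) -> (R -> R)) :
  Prop := exists C : R, forall f, inX rho f -> inX rho (T f) /\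
    (rho (T f) <= C%:E * rho f)%E.

Definition interpolation_L1_Linf (rho : (R -> R) -> \bar R) : Prop :=
  [/\
      (exists C : R, forall f (M : R), measurable_fun I01 f ->
          ae_bdd01 f M -> (rho f <= (C * M)%:E)%E),
      (exists C : R, forall f, inX rho f ->
          mu.-integrable I01 (EFin \o f) /\ (L1norm f <= C%:E * rho f)%E) &
      (forall T, ae_linear T -> bounded_L1 T -> bounded_Linf T ->
          bounded_on_X rho T)].

Definition rademacher (k : nat) (t : R) : R :=
  Num.sg (sin (2 ^+ k * pi * t)).

(* Walsh functions, Paley numbering: w_n = prod_i r_{i+1}^{a_i},
   n = sum_i a_i 2^i (bits a_i of n) *)
Definition walsh (n : nat) (t : R) : R :=
  \prod_(i < n) (if odd (n %/ 2 ^ i) then rademacher i.+1 t else 1).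

Definition lacunary (q : R) (n : nat -> nat) : Prop :=
  forall k, (0 < n k)%N /\ q * (n k)%:R <= (n k.+1)%:R.

End Defs.

(* Main.v *)
Require Import Defs.
From mathcomp Require Import all_boot all_order all_algebra.
From mathcomp Require Import all_classical all_reals all_analysis.
From mathcomp Require Import ring lra.
From mathcomp Require Import zify.
From mathcomp Require Import measurable_realfun.
Import Order.TTheory GRing.Theory Num.Theory.
Import numFieldNormedType.Exports.

Definition bitn (i n : nat) : bool := odd (n %/ 2 ^ i).
Definition flipn (b m : nat) : nat := if bitn b m then (m - 2 ^ b)%N else (m + 2 ^ b)%N.

Lemma bitnS i n : bitn i.+1 n = bitn i n./2.
Proof. by rewrite /bitn -divn2 -divnMA -expnS. Qed.

Lemma bitn0 n : bitn 0 n = odd n.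
Proof. by rewrite /bitn expn0 divn1. Qed.

Lemma flip0_half m : (flipn 0 m)./2 = m./2 /\ odd (flipn 0 m) = ~~ odd m.
Proof. rewrite /flipn bitn0 expn0; case: ifP => h; lia. Qed.

Lemma flipS_half b m : (flipn b.+1 m)./2 = flipn b m./2 /\ odd (flipn b.+1 m) = odd m.
Proof.
rewrite /flipn bitnS expnS; have := expn_gt0 2 b; set c := (2 ^ b)%N => hc.
case: ifP => h.
  have hm : (c <= m./2)%N.
    move: h; rewrite /bitn; case: (leqP c m./2) => // /divn_small -> //.
  rewrite mul2n; lia.
rewrite mul2n; lia.
Qed.

Lemma bitn_flip b b' m : bitn b' (flipn b m) = bitn b' m (+) (b' == b).
Proof.
elim: b' b m => [|b' IH] [|b] m.
- by rewrite !bitn0 (flip0_half m).2; case: (odd m).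
- by rewrite !bitn0 (flipS_half b m).2 addbF.
- by rewrite !bitnS (flip0_half m).1 addbF.
- by rewrite !bitnS (flipS_half b m).1 IH eqSS.
Qed.

Lemma bitn_ge b m : bitn b m -> (2 ^ b <= m)%N.
Proof. rewrite /bitn; case: (leqP (2^b) m) => // /divn_small -> //. Qed.

Lemma flipnK b : involutive (flipn b).
Proof.
move=> m; have := bitn_flip b b m; rewrite eqxx addbT.
case h: (bitn b m) => /= h2.
  have em : flipn b m = (m - 2 ^ b)%N by rewrite /flipn h.
  by rewrite {1}/flipn h2 em subnK // bitn_ge.
have em : flipn b m = (m + 2 ^ b)%N by rewrite /flipn h.
by rewrite {1}/flipn h2 em addnK.
Qed.

Lemma bitn_big i n : (n < 2 ^ i)%N -> bitn i n = false.
Proof. by move=> h; rewrite /bitn divn_small. Qed.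

Lemma flipn_lt J b m : (b < J)%N -> (m < 2 ^ J)%N -> (flipn b m < 2 ^ J)%N.
Proof.
elim: J b m => [//|J IH] [|b] m hb hm.
- rewrite /flipn bitn0 expn0; case: ifP => h; first exact: leq_ltn_trans (leq_subr _ _) hm.
  rewrite expnS in hm *; move: hm; have := expn_gt0 2 J; set c := (2 ^ J)%N; lia.
- rewrite expnS in hm *.
  have := flipS_half b m => -[h1 h2].
  have : (flipn b m./2 < 2 ^ J)%N by apply: IH => //; move: hm; set c := (2 ^ J)%N; lia.
  move: hm; set c := (2 ^ J)%N; lia.
Qed.

Lemma bits_eq J n n' : (n < 2 ^ J)%N -> (n' < 2 ^ J)%N ->
  (forall i, (i < J)%N -> bitn i n = bitn i n') -> n = n'.
Proof.
elim: J n n' => [|J IH] n n'; first by rewrite expn0; lia.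
rewrite expnS => hn hn' hb; move: hn hn'; set c := (2 ^ J)%N => hn hn'.
have h0 := hb 0%N isT; rewrite !bitn0 in h0.
have : n./2 = n'./2.
  apply: IH; try lia. by move=> i hi; rewrite -!bitnS; apply: hb.
lia.
Qed.

Lemma bits_low J j n : (n < 2 ^ J)%N -> (j <= J)%N ->
  (forall i, (j <= i < J)%N -> bitn i n = false) <-> (n < 2 ^ j)%N.
Proof.
move=> hn hj; split; last first.
  move=> h i /andP[hi _]; apply: bitn_big; apply: (leq_trans h); exact: leq_pexp2l.
move=> h; rewrite ltnNge; apply/negP => hjn.
have hn0 : (0 < n)%N by apply: leq_trans hjn; exact: expn_gt0.
set i := trunc_log 2 n.
have hi1 : (2 ^ i <= n)%N by apply: trunc_logP.
have hi2 : (n < 2 ^ i.+1)%N by apply: trunc_log_ltn.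
have hji : (j <= i)%N by apply: trunc_log_max.
have hiJ : (i < J)%N.
  by rewrite -(@ltn_exp2l 2) //; apply: leq_ltn_trans hi1 hn.
have := h i; rewrite hji hiJ /bitn => /(_ isT).
have -> : (n %/ 2 ^ i = 1)%N.
  apply/eqP; rewrite eqn_leq divn_gt0 ?expn_gt0 // hi1 andbT.
  by rewrite -ltnS ltn_divLR ?expn_gt0 // -expnS.
by [].
Qed.

Local Open Scope ring_scope.

Section S_B.
Local Open Scope ring_scope.

Variable R : realType.

Definition sgnb (b : bool) : R := if b then -1 else 1.

Lemma sgnbN b : sgnb (~~ b) = - sgnb b.
Proof. by case: b; rewrite /sgnb ?opprK. Qed.

Lemma sgn_sin (p : nat) (x : R) : p%:R < x < p.+1%:R ->
  Num.sg (sin (pi * x)) = sgnb (odd p).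
Proof.
elim: p x => [|p IH] x /andP[h1 h2].
  apply: gtr0_sg; apply: sin_gt0_pi; apply/andP; split.
    by apply: mulr_gt0 => //; exact: pi_gt0.
  by rewrite -[ltRHS]mulr1 ltr_pM2l ?pi_gt0.
have -> : pi * x = pi * (x - 1) + pi by ring.
rewrite sinDpi sgrN IH /= ?sgnbN //.
apply/andP; split.
  by rewrite ltrBrDr -natr1 in h1 *.
by rewrite ltrBlDr -natr1 in h2 *.
Qed.

Definition Dset (J m : nat) : set R :=
  `](m%:R / 2 ^+ J), (m.+1%:R / 2 ^+ J)[%classic.

Lemma rad_D (J m k : nat) (t : R) : (0 < k <= J)%N -> Dset J m t ->
  rademacher k t = sgnb (bitn (J - k) m).
Proof.
move=> /andP[k0 kJ]; rewrite /Dset /= in_itv /= => /andP[h1 h2].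
rewrite /rademacher -mulrA [_ * (pi * _)]mulrCA (@sgn_sin (m %/ 2 ^ (J - k))) //.
have e : (2 ^+ J : R) = 2 ^+ k * 2 ^+ (J - k) by rewrite -exprD subnKC.
have p2 : (0 : R) < 2 ^+ (J - k) by apply: exprn_gt0.
have p2' : (0 : R) < 2 ^+ k by apply: exprn_gt0.
rewrite e in h1 h2.
rewrite ltr_pdivrMr ?mulr_gt0 // in h1.
rewrite ltr_pdivlMr ?mulr_gt0 // in h2.
apply/andP; split.
  rewrite -(ltr_pM2r p2); apply: le_lt_trans (_ : m%:R < _).
    by rewrite -(natrX R 2 (J - k)) -natrM ler_nat leq_trunc_div.
  by rewrite (mulrC (2 ^+ k)) -mulrA.
rewrite -(ltr_pM2r p2); apply: lt_le_trans (_ : m.+1%:R <= _).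
  by rewrite (mulrC (2 ^+ k)) -mulrA.
by rewrite -(natrX R 2 (J - k)) -natrM ler_nat ltn_ceil ?expn_gt0.
Qed.

Definition Wv (J n m : nat) : R :=
  \prod_(i < n) (if bitn i n then sgnb (bitn (J - i.+1) m) else 1).

Lemma bitn_ltJ J n i : (n < 2 ^ J)%N -> bitn i n -> (i < J)%N.
Proof.
move=> hn hb; rewrite ltnNge; apply/negP => hJ.
have h2 : (n < 2 ^ i)%N by apply: (leq_trans hn); rewrite leq_exp2l.
by rewrite bitn_big in hb.
Qed.

Lemma walsh_D J n m t : (n < 2 ^ J)%N -> Dset J m t -> walsh n t = Wv J n m.
Proof.
move=> hn hD; rewrite /walsh /Wv; apply: eq_bigr => i _.
rewrite -/(bitn i n); case hb: (bitn i n) => //.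
by apply: rad_D => //; rewrite ltn0Sn /=; apply: bitn_ltJ hb.
Qed.

Lemma Wv_flip J n i m : (n < 2 ^ J)%N -> (i < J)%N ->
  Wv J n (flipn (J - i.+1) m) = sgnb (bitn i n) * Wv J n m.
Proof.
move=> hn hi; rewrite /Wv.
have step : forall l : 'I_n, (if bitn l n then sgnb (bitn (J - l.+1) (flipn (J - i.+1) m)) else 1)
   = (if (l == i :> nat) then sgnb (bitn i n) else 1) *
     (if bitn l n then sgnb (bitn (J - l.+1) m) else 1).
  move=> l; rewrite bitn_flip.
  case hb: (bitn l n); last first.
    by case: eqP => [e|]; rewrite ?mul1r // -e hb /sgnb mul1r.
  have hl := @bitn_ltJ J n l hn hb.
  have -> : (J - l.+1 == J - i.+1)%N = (l == i :> nat) by apply/eqP/eqP; lia.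
  case: eqP => [e|]; last by rewrite addbF mul1r.
  by rewrite -e hb addbT sgnbN mulN1r.
rewrite (eq_bigr _ (fun l _ => step l)) big_split /=; congr (_ * _).
case: (ltnP i n) => hin.
  rewrite (bigD1 (Ordinal hin)) //= eqxx big1 ?mulr1 // => l hl.
  by case: eqP => // e; move: hl; rewrite -val_eqE /= e eqxx.
have h2 : (n < 2 ^ i)%N by apply: (leq_trans (ltn_expl n (isT : (1 < 2)%N))); rewrite leq_exp2l.
rewrite bitn_big // big1 //.
by move=> l _; case: eqP.
Qed.

Definition Cop (J i : nat) (s : bool) (F : nat -> R) : nat -> R :=
  fun m => (F m + sgnb s * F (flipn (J - i.+1) m)) / 2.

Lemma Cop_sum J i s N (c : nat -> R) (nn : nat -> nat) m :
  (forall k, (k < N)%N -> (nn k < 2 ^ J)%N) -> (i < J)%N ->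
  Cop J i s (fun m => \sum_(k < N) c k * Wv J (nn k) m) m =
  \sum_(k < N) (c k * (bitn i (nn k) == s)%:R) * Wv J (nn k) m.
Proof.
move=> hn hi; rewrite /Cop mulr_sumr -big_split mulr_suml /=; apply: eq_bigr => k _.
rewrite Wv_flip //; last exact: hn.
case: s; case: (bitn i (nn k)); by rewrite /sgnb /=; field.
Qed.

End S_B.

Section S_C.
Local Open Scope classical_set_scope.
Local Open Scope ring_scope.

Variable R : realType.
Notation mu := (@lebesgue_measure R).
Notation I01 := (`[0%R, 1%R]%classic : set R).

Lemma sg_nd : {homo (@Num.sg R) : x y / x <= y}.
Proof.
move=> x y hxy; case: (sgrP x) => hx; case: (sgrP y) => hy //; lra.
Qed.

Lemma measurable_rad k : measurable_fun setT (@rademacher R k).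
Proof.
have -> : @rademacher R k = Num.sg \o (fun t => sin (2 ^+ k * pi * t)) by [].
apply: measurableT_comp.
  exact: nondecreasing_measurable sg_nd.
apply: continuous_measurable_fun => x.
apply: continuous_comp; last exact: continuous_sin.
by apply: continuousM; [exact: cst_continuous | exact: cvg_id].
Qed.

Lemma measurable_walsh nn : measurable_fun setT (@walsh R nn).
Proof.
rewrite /walsh.
apply: (@measurable_prod _ _ _ setT _ (index_enum 'I_nn) (fun (i : 'I_nn) (t : R) => if odd (nn %/ 2 ^ i) then rademacher i.+1 t else 1)) => i _.
by case: (odd _); [exact: measurable_rad | exact: measurable_cst].
Qed.

Lemma Dset_disj J m m' (t : R) : Dset R J m t -> Dset R J m' t -> m = m'.
Proof.
rewrite /Dset /= !in_itv /= => /andP[a1 a2] /andP[b1 b2].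
have p : (0 : R) < 2 ^+ J by apply: exprn_gt0.
rewrite ltr_pdivrMr // in a1; rewrite ltr_pdivlMr // in a2.
rewrite ltr_pdivrMr // in b1; rewrite ltr_pdivlMr // in b2.
have h1 : (m%:R : R) < m'.+1%:R by apply: lt_trans a1 b2.
have h2 : (m'%:R : R) < m.+1%:R by apply: lt_trans b1 a2.
rewrite ltr_nat in h1; rewrite ltr_nat in h2; lia.
Qed.

Lemma Dset_I01 J m : (m < 2 ^ J)%N -> Dset R J m `<=` I01.
Proof.
move=> hm t; rewrite /Dset /= !in_itv /= => /andP[a1 a2].
have p : (0 : R) < 2 ^+ J by apply: exprn_gt0.
apply/andP; split.
  by apply/ltW; apply: le_lt_trans a1; apply: divr_ge0.
apply/ltW; apply: (lt_le_trans a2); rewrite ler_pdivrMr // mul1r.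
by rewrite -(natrX R 2 J) ler_nat.
Qed.

Definition Gf (J : nat) (F : nat -> R) (t : R) : R :=
  \sum_(m < 2 ^ J) F m * \1_(Dset R J m) t.

Lemma Gf_D J F m t : (m < 2 ^ J)%N -> Dset R J m t -> Gf J F t = F m.
Proof.
move=> hm hD; rewrite /Gf (bigD1 (Ordinal hm)) //= indicE mem_set // mulr1.
rewrite big1 ?addr0 // => l hl; rewrite indicE memNset ?mulr0 // => hl'.
by move: hl; rewrite -val_eqE /= (Dset_disj _ _ _ _ hl' hD) eqxx.
Qed.

Lemma Gf_out J F t : (forall m, (m < 2 ^ J)%N -> ~ Dset R J m t) -> Gf J F t = 0.
Proof.
move=> h; rewrite /Gf big1 // => l _; rewrite indicE memNset ?mulr0 //.
exact: h.
Qed.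

Lemma measurable_Gf J F : measurable_fun setT (Gf J F).
Proof.
rewrite /Gf; apply: measurable_sum => m; apply: measurable_funM.
  exact: measurable_cst.
by apply: measurable_indic; exact: measurable_itv.
Qed.

Lemma mu_Dset J m : mu (Dset R J m) = (2 ^+ J)^-1%:E.
Proof.
rewrite /Dset lebesgue_measure_itv /= lte_fin.
have p : (0 : R) < 2 ^+ J by apply: exprn_gt0.
rewrite ltr_pM2r ?invr_gt0 // ltr_nat ltnSn -EFinD; congr EFin.
by rewrite -mulrBl -natrB // subSnn mul1r.
Qed.

Lemma in_bigsetU n (P : pred 'I_n) (A : 'I_n -> set R) x :
  (\big[setU/set0]_(m < n | P m) A m) x <-> exists2 m : 'I_n, P m & A m x.
Proof.
rewrite -bigcup_seq_cond; split => [[m /andP[_ Pm] Am]|[m Pm Am]].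
  by exists m.
by exists m => //=; rewrite mem_index_enum Pm.
Qed.

Lemma Gf_distr J F (s : R) : 0 <= s ->
  mu (I01 `&` [set x | s < `|Gf J F x|]) =
  (\sum_(m < 2 ^ J | (s < `|F m|)%R) (2 ^+ J)^-1%:E)%E.
Proof.
move=> s0.
have -> : I01 `&` [set x | s < `|Gf J F x|] =
    \big[setU/set0]_(m < 2 ^ J | (s < `|F m|)%R) Dset R J m.
  apply/seteqP; split => x.
    move=> [hI hs]; rewrite /= in hs; apply/in_bigsetU.
    have [[m hm hD]|nD] := pselect (exists2 m, (m < 2 ^ J)%N & Dset R J m x).
      by exists (Ordinal hm) => //=; rewrite -(Gf_D J F m x hm hD).
    rewrite Gf_out ?normr0 in hs; first by exfalso; move: hs; rewrite ltNge s0.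
    by move=> m hm hD; apply: nD; exists m.
  move/in_bigsetU => [m hs hD]; split; first exact: (Dset_I01 _ _ (ltn_ord m)).
  by rewrite /= (Gf_D J F m x (ltn_ord m) hD).
rewrite measure_bigsetU_ord_cond //.
- by apply: eq_bigr => m _; exact: mu_Dset.
- by move=> m _; exact: measurable_itv.
- move=> m m' _ _ [x [h1 h2]]; apply: val_inj => /=.
  exact: Dset_disj _ _ _ _ h1 h2.
Qed.

Lemma Gf_perm J F (p : nat -> nat) (s : R) :
  (forall m, (m < 2 ^ J)%N -> (p m < 2 ^ J)%N) -> involutive p ->
  mu (I01 `&` [set x | s < `|Gf J (F \o p) x|]) =
  mu (I01 `&` [set x | s < `|Gf J F x|]).
Proof.
move=> hp ip.
have [s0|s0] := leP 0 s; last first.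
  have e : forall G : R -> R, I01 `&` [set x | s < `|G x|] = I01.
    move=> G; apply/seteqP; split => x; first by case.
    by move=> hx; split => //=; apply: lt_le_trans s0 _.
  by rewrite !e.
rewrite !Gf_distr //.
pose po (m : 'I_(2 ^ J)) : 'I_(2 ^ J) := Ordinal (hp m (ltn_ord m)).
have ipo : injective po.
  by move=> a b /(congr1 val) /= /(congr1 p); rewrite !ip => /val_inj.
rewrite [RHS](reindex_inj ipo) /=.
by apply: eq_bigl.
Qed.

End S_C.

Section S_D.
Local Open Scope classical_set_scope.
Local Open Scope ring_scope.

Variable R : realType.
Notation mu := (@lebesgue_measure R).
Notation I01 := (`[0%R, 1%R]%classic : set R).
Variable rho : (R -> R) -> \bar R.
Hypothesis hb : banach_function_norm rho.
Hypothesis hri : rearrangement_invariant rho.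

Lemma mI01 (f : R -> R) : measurable_fun setT f -> measurable_fun I01 f.
Proof. by move=> mf; apply: measurable_funS mf => //. Qed.

Lemma rho_ge0 (f : R -> R) : measurable_fun setT f -> (0 <= rho f)%E.
Proof. by case: hb => -[h0 _ _ _ _] _ mf; apply: h0; apply: mI01. Qed.

Lemma rho_scale (c : R) (f : R -> R) : measurable_fun setT f ->
  rho (fun x => c * f x) = (`|c|%:E * rho f)%E.
Proof. by case: hb => -[_ _ h _ _] _ mf; apply: h; apply: mI01. Qed.

Lemma rho_add (f g : R -> R) : measurable_fun setT f -> measurable_fun setT g ->
  (rho (fun x => (f x + g x)%R) <= rho f + rho g)%E.
Proof. by case: hb => -[_ _ _ h _] _ mf mg; apply: h; apply: mI01. Qed.

Lemma rho0 : rho (fun=> 0) = 0%E.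
Proof.
case: hb => -[_ h _ _ _] _; apply/(h (fun=> 0)); first exact: measurable_cst.
exact: aeW.
Qed.

Lemma Phi_perm J F (p : nat -> nat) :
  (forall m, (m < 2 ^ J)%N -> (p m < 2 ^ J)%N) -> involutive p ->
  rho (Gf R J (F \o p)) = rho (Gf R J F).
Proof.
move=> hp ip; apply: hri.
- by apply: measurable_funS (measurable_Gf R J _).
- by apply: measurable_funS (measurable_Gf R J _).
- by move=> t; apply: Gf_perm.
Qed.

Lemma Gf_Cop J i s F : Gf R J (Cop R J i s F) =
  (fun t => 2^-1 * (Gf R J F t + sgnb R s * Gf R J (F \o flipn (J - i.+1)) t)).
Proof.
apply/funext => t; rewrite /Gf /Cop [X in _ + X]mulr_sumr -big_split mulr_sumr /=.
apply: eq_bigr => m _; rewrite /=; ring.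
Qed.

Lemma Phi_C J i s F : (i < J)%N ->
  (rho (Gf R J (Cop R J i s F)) <= rho (Gf R J F))%E.
Proof.
move=> hi; rewrite Gf_Cop rho_scale; last first.
  apply: measurable_funD; first exact: measurable_Gf.
  by apply: measurable_funM; [exact: measurable_cst|exact: measurable_Gf].
have hle : (rho (fun t => (Gf R J F t + sgnb R s * Gf R J (F \o flipn (J - i.+1)) t)%R)
   <= rho (Gf R J F) + rho (Gf R J F))%E.
  apply: (le_trans (rho_add (Gf R J F) (fun t => sgnb R s * Gf R J (F \o flipn (J - i.+1)) t) _ _)).
  - exact: measurable_Gf.
  - by apply: measurable_funM; [exact: measurable_cst|exact: measurable_Gf].
  rewrite rho_scale; last exact: measurable_Gf.
  rewrite Phi_perm; last exact: flipnK.
    have -> : `|sgnb R s| = 1 by case: s; rewrite /sgnb ?normrN normr1.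
    by rewrite mul1e.
  by move=> m hm; apply: flipn_lt => //; lia.
have := rho_ge0 _ (measurable_Gf R J F).
case: (rho (Gf R J F)) hle => [r| |] hle h0; last by [].
  rewrite -EFinD in hle.
  apply: le_trans (lee_wpmul2l _ hle) _; first by rewrite lee_fin.
  by rewrite -EFinM lee_fin ger0_norm //; lra.
by rewrite leey.
Qed.

Definition pass (ops : seq (nat * bool)) (nn : nat) : R :=
  \prod_(o <- ops) (bitn o.1 nn == o.2)%:R.

Lemma Phi_ops J N (c : nat -> R) (nn : nat -> nat) ops :
  (forall k, (k < N)%N -> (nn k < 2 ^ J)%N) -> all (fun o => o.1 < J)%N ops ->
  (rho (Gf R J (fun m => (\sum_(k < N) (c k * pass ops (nn k)) * Wv R J (nn k) m)%R))
   <= rho (Gf R J (fun m => (\sum_(k < N) c k * Wv R J (nn k) m)%R)))%E.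
Proof.
move=> hn; elim: ops c => [|o ops IH] c.
  by move=> _; under eq_fun do under eq_bigr do rewrite /pass big_nil mulr1.
move=> /= /andP[ho hops].
have e : (fun m => \sum_(k < N) (c k * pass (o :: ops) (nn k)) * Wv R J (nn k) m)
  = (fun m => \sum_(k < N) ((c k * (bitn o.1 (nn k) == o.2)%:R) * pass ops (nn k)) * Wv R J (nn k) m).
  apply/funext => m; apply: eq_bigr => k _; rewrite /pass big_cons; ring.
rewrite e; apply: (le_trans (IH (fun k => c k * (bitn o.1 (nn k) == o.2)%:R) hops)).
have e2 : (fun m => \sum_(k < N) (c k * (bitn o.1 (nn k) == o.2)%:R) * Wv R J (nn k) m)
  = Cop R J o.1 o.2 (fun m => \sum_(k < N) c k * Wv R J (nn k) m).
  by apply/funext => m; rewrite Cop_sum.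
rewrite e2; exact: Phi_C.
Qed.

End S_D.

Section S_E.
Local Open Scope classical_set_scope.
Local Open Scope ring_scope.

Variable R : realType.
Notation mu := (@lebesgue_measure R).
Notation I01 := (`[0%R, 1%R]%classic : set R).
Variable rho : (R -> R) -> \bar R.
Hypothesis hb : banach_function_norm rho.
Hypothesis hri : rearrangement_invariant rho.

Lemma countable_grid J : countable (range (fun m : nat => (m%:R / 2 ^+ J : R))).
Proof. exact: sub_countable (card_image_le _ _) (countableP _). Qed.

Lemma rho_bridge J (f g : R -> R) : measurable_fun setT f -> measurable_fun setT g ->
  (forall m t, (m < 2 ^ J)%N -> Dset R J m t -> f t = g t) -> (rho f <= rho g)%E.
Proof.
case: hb => -[_ _ _ _ hl] _ mf mg h; apply: hl.
- by apply: measurable_funS mf.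
- by apply: measurable_funS mg.
exists (range (fun m : nat => (m%:R / 2 ^+ J : R))); split.
- apply: countable_measurable; last exact: countable_grid.
  by move=> t; exact: measurable_set1.
- exact: countable_lebesgue_measure0 (countable_grid J).
move=> x /= hx; have [//|hN] := pselect (range (fun m : nat => (m%:R / 2 ^+ J : R)) x).
exfalso; apply: hx => hI.
have p : (0 : R) < 2 ^+ J by apply: exprn_gt0.
move: hI; rewrite /= in_itv /= => /andP[x0 x1].
have y0 : 0 <= x * 2 ^+ J by apply: mulr_ge0 => //; apply: ltW.
have /andP[t1 t2] := truncn_itv y0.
set m := Num.truncn (x * 2 ^+ J) in t1 t2.
have [e|ne] := eqVneq (m%:R : R) (x * 2 ^+ J).
  by exfalso; apply: hN; exists m => //; rewrite e mulrK // unitfE gt_eqF.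
have t1' : (m%:R : R) < x * 2 ^+ J by rewrite lt_neqAle ne t1.
have hD : Dset R J m x.
  by rewrite /Dset /= in_itv /= ltr_pdivrMr // ltr_pdivlMr // t1' t2.
have hm : (m < 2 ^ J)%N.
  rewrite -(ltr_nat R) natrX; apply: lt_le_trans t1' _.
  by rewrite -[leRHS]mul1r ler_pM2r.
by rewrite (h m x hm hD).
Qed.

Lemma rho_sum L (h : nat -> R -> R) : (forall k, measurable_fun setT (h k)) ->
  (rho (fun t => (\sum_(k < L) h k t)%R) <= \sum_(k < L) rho (h k))%E.
Proof.
move=> mh; elim: L => [|L IH].
  rewrite big_ord0; under eq_fun do rewrite big_ord0.
  by rewrite (rho0 _ _ hb).
rewrite big_ord_recr /=; under eq_fun do rewrite big_ord_recr /=.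
apply: (le_trans (rho_add _ _ hb (fun t => (\sum_(k < L) h k t)%R) (h L) _ _)).
- by apply: measurable_sum.
- exact: mh.
by apply: leeD.
Qed.

End S_E.

Section S_F.
Local Open Scope classical_set_scope.
Local Open Scope ring_scope.

Variable R : realType.

Lemma pass_all ops nn : pass R ops nn = (all (fun o => bitn o.1 nn == o.2) ops)%:R.
Proof.
rewrite /pass; elim: ops => [|o ops IH]; first by rewrite big_nil.
by rewrite big_cons IH /=; case: (bitn _ _ == _); rewrite ?mul1r ?mul0r.
Qed.

Lemma sum_ge_count M b : (\sum_(k < M) (b <= k : nat))%N = (M - b)%N.
Proof.
elim: M => [|M IH]; first by rewrite big_ord0.
rewrite big_ord_recr /= IH; case: (leqP b M) => h /=; lia.
Qed.

Lemma my_bernoulli (h : R) L : 0 <= h -> 1 + L%:R * h <= (1 + h) ^+ L.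
Proof.
move=> h0; elim: L => [|L IH]; first by rewrite mul0r addr0 expr0.
rewrite exprS; apply: le_trans (_ : (1 + h) * (1 + L%:R * h) <= _).
  rewrite -natr1 mulrDl mul1r; have : 0 <= L%:R * h * h by apply: mulr_ge0 => //; apply: mulr_ge0.
  nra.
by apply: ler_wpM2l => //; lra.
Qed.

Lemma Gf_add J F G : Gf R J (fun m => F m + G m) = (fun t => Gf R J F t + Gf R J G t).
Proof. by apply/funext => t; rewrite /Gf -big_split /=; apply: eq_bigr => m _; ring. Qed.

Lemma Gf_sumk J L (c : nat -> nat -> R) :
  Gf R J (fun m => \sum_(k < L) c k m) = (fun t => \sum_(k < L) Gf R J (c k) t).
Proof.
apply/funext => t; rewrite /Gf exchange_big /=; apply: eq_bigr => m _.
by rewrite mulr_suml.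
Qed.

Lemma Gf0 J : Gf R J (fun=> 0) = (fun=> 0).
Proof. by apply/funext => t; rewrite /Gf big1 // => m _; rewrite mul0r. Qed.

End S_F.

Theorem main (R : realType) (rho : (R -> R) -> \bar R)
  (q : R) (n : nat -> nat) :
  banach_function_norm rho -> rearrangement_invariant rho ->
  1 < q -> lacunary q n ->
  exists K : R, 0 < K /\
    forall (M N : nat) (a : nat -> R), (M < N)%N ->
      (rho (fun t => (\sum_(k < M) a k * walsh (n k) t)%R)
        <= K%:E * rho (fun t => (\sum_(k < N) a k * walsh (n k) t)%R))%E.
Proof.
move=> hb hri hq hlac.
pose L0 := (Num.truncn ((q - 1)^-1)).+1.
have hq1 : 0 < q - 1 by lra.
have hL0 : 2 <= q ^+ L0.
  have := my_bernoulli _ (q - 1) L0 (ltW hq1); rewrite (_ : 1 + (q - 1) = q); last by ring.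
  move=> hb'.
  apply: le_trans hb'.
  have hi : 0 <= (q - 1)^-1 by rewrite invr_ge0 ltW.
  have /andP[_ h2] := truncn_itv hi.
  rewrite -(ltr_pM2r hq1) mulVf ?gt_eqF // -/L0 in h2.
  lra.
have hq0 : 1 <= q by lra.
have hinc k d : q ^+ d * (n k)%:R <= (n (k + d)%N)%:R.
  elim: d => [|d IH]; first by rewrite expr0 mul1r addn0.
  rewrite addnS exprS -mulrA; apply: (le_trans _ (hlac (k + d)%N).2).
  by apply: ler_wpM2l => //; lra.
have hmono k k' : (k <= k')%N -> (n k <= n k')%N.
  move=> h; rewrite -(ler_nat R) -(subnKC h); apply: le_trans (hinc k (k' - k)%N).
  have := exprn_ege1 (k' - k)%N hq0; have : 0 <= (n k)%:R :> R := ler0n _ _; nra.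
have hinj k k' : (k < k')%N -> (n k < n k')%N.
  move=> h; apply: leq_trans (hmono k.+1 k' h).
  rewrite -(ltr_nat R); apply: lt_le_trans (hlac k).2.
  by rewrite -[X in X < _]mul1r ltr_pM2r // ltr0n (hlac k).1.
exists (1 + L0%:R); split; first by apply: ltr_pwDl.
move=> M N a hMN.
pose J := (\sum_(k < N) n k)%N.
have hJ k : (k < N)%N -> (n k < 2 ^ J)%N.
  move=> hk; apply: leq_trans (ltn_expl _ (isT : (1 < 2)%N)) _; rewrite leq_exp2l //.
  by rewrite /J (bigD1 (Ordinal hk)) //= leq_addr.
pose S (L : nat) (c : nat -> R) (t : R) := (\sum_(k < L) c k * walsh (n k) t).
pose FF (L : nat) (c : nat -> R) (m : nat) := (\sum_(k < L) c k * Wv R J (n k) m).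
have mS L c : measurable_fun setT (S L c).
  apply: measurable_sum => k; apply: measurable_funM; first exact: measurable_cst.
  exact: measurable_walsh.
have link L c : (L <= N)%N -> forall m t, (m < 2 ^ J)%N -> Dset R J m t ->
    Gf R J (FF L c) t = S L c t.
  move=> hL m t hm hD; rewrite (Gf_D R J _ m t hm hD) /FF /S; apply: eq_bigr => k _.
  rewrite (walsh_D R J (n k) m t _ hD) //; apply: hJ; exact: leq_trans (ltn_ord k) hL.
have hxN : (rho (Gf R J (FF N a)) <= rho (S N a))%E.
  apply: (rho_bridge _ _ hb J (Gf R J (FF N a)) (S N a) (measurable_Gf _ _ _) (mS N a)).
  by move=> m t hm hD; exact: (link N a (leqnn N) m t hm hD).
have hSM : (rho (S M a) <= rho (Gf R J (FF M a)))%E.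
  apply: (rho_bridge _ _ hb J (S M a) (Gf R J (FF M a)) (mS M a) (measurable_Gf _ _ _)).
  by move=> m t hm hD; symmetry; exact: (link M a (ltnW hMN) m t hm hD).
change (rho (S M a) <= (1 + L0%:R)%:E * rho (S N a))%E.
have hx0 : (0 <= rho (Gf R J (FF N a)))%E by apply: (rho_ge0 _ _ hb); exact: measurable_Gf.
have hK0 : (0 : R) < 1 + L0%:R by apply: ltr_pwDl.
case hxE: (rho (Gf R J (FF N a))) => [r| |]; last first.
- by rewrite hxE in hx0.
- rewrite hxE leye_eq in hxN; rewrite (eqP hxN) muleC gt0_mulye ?leey //.
rewrite hxE lee_fin in hx0.
pose j := trunc_log 2 (n M).
have hnM0 : (0 < n M)%N := (hlac M).1.
have hj1 : (2 ^ j <= n M)%N by apply: trunc_logP.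
have hj2 : (n M < 2 ^ j.+1)%N by apply: trunc_log_ltn.
have hjJ : (j < J)%N.
  by rewrite -(@ltn_exp2l 2) //; apply: leq_ltn_trans hj1 (hJ M hMN).
have hbig k : (M <= k)%N -> (2 ^ j <= n k)%N.
  by move=> h; apply: leq_trans hj1 (hmono _ _ h).
have hcount : (\sum_(k < M) (2 ^ j <= n k : nat) <= L0)%N.
  apply: (@leq_trans (\sum_(k < M) (M - L0 <= k : nat))%N); last first.
    by rewrite sum_ge_count; lia.
  apply: leq_sum => k _; case: (leqP (2 ^ j) (n k)) => //= hk.
  rewrite leqNgt; apply/negP => hlt.
  have hkM : (k + (M - k))%N = M by rewrite subnKC // ltnW.
  have h1 := hinc k (M - k)%N; rewrite hkM in h1.
  have h2 : q ^+ L0 <= q ^+ (M - k)%N by apply: ler_weXn2l => //; lia.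
  have h3 : ((2 ^ j)%N%:R : R) <= (n k)%:R by rewrite ler_nat.
  have h4 : ((n M)%:R : R) < 2 * (2 ^ j)%N%:R.
    by rewrite -natrM -expnS ltr_nat.
  have h5 : (0 : R) <= (n k)%:R by [].
  nra.
pose opsP := [seq (i, false) | i <- iota j (J - j)].
have hpassP n' : (n' < 2 ^ J)%N -> pass R opsP n' = (n' < 2 ^ j)%N%:R.
  move=> hn'; rewrite pass_all all_map; congr ((nat_of_bool _)%:R); apply/idP/idP.
    move/allP => h; apply/(bits_low J j n' hn' (ltnW hjJ)).1 => i /andP[h1 h2].
    have := h i; rewrite mem_iota h1 subnKC ?h2 ?(ltnW hjJ) //= => /(_ isT).
    by move/eqP.
  move=> h; apply/allP => i; rewrite mem_iota => /andP[h1 h2] /=.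
  rewrite subnKC ?(ltnW hjJ) // in h2.
  by rewrite ((bits_low J j n' hn' (ltnW hjJ)).2 h i) ?h1 ?h2.
have hopsP : all (fun o => o.1 < J)%N opsP.
  rewrite all_map; apply/allP => i; rewrite mem_iota subnKC ?(ltnW hjJ) //.
  by case/andP.
pose opsk (k : nat) := [seq (i, bitn i (n k)) | i <- iota 0 J].
have hpassk k k' : (k < N)%N -> (k' < N)%N -> pass R (opsk k) (n k') = (k' == k)%:R.
  move=> hk hk'; rewrite pass_all all_map; congr ((nat_of_bool _)%:R); apply/idP/eqP.
    move/allP => h.
    have e : n k' = n k.
      apply: (bits_eq J) => //; try exact: hJ.
      move=> i hi; have := h i; rewrite mem_iota add0n hi /= => /(_ isT).
      by move/eqP.
    case: (ltngtP k' k) => // hc; have := hinj _ _ hc; by rewrite e ltnn.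
  by move=> ->; apply/allP => i _ /=.
have hopsk k : all (fun o => o.1 < J)%N (opsk k).
  by rewrite all_map; apply/allP => i; rewrite mem_iota add0n.
pose P := (fun m => \sum_(k < N) (a k * pass R opsP (n k)) * Wv R J (n k) m).
pose cR (k : nat) := (fun m => (a k * (2 ^ j <= n k)%N%:R) * Wv R J (n k) m).
have heq : FF M a = (fun m => P m + \sum_(k < M) cR k m).
  apply/funext => m.
  have eP : P m = \sum_(k < M) (a k * (n k < 2 ^ j)%N%:R) * Wv R J (n k) m.
    rewrite (big_ord_widen N (fun k => (a k * (n k < 2 ^ j)%N%:R) * Wv R J (n k) m) (ltnW hMN)).
    rewrite /P [LHS](bigID (fun k : 'I_N => (k < M)%N)) /= [X in _ + X]big1 ?addr0.
      by apply: eq_bigr => k hk; rewrite hpassP // hJ.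
    move=> k hk; rewrite hpassP ?hJ // ltnNge hbig ?mulr0 ?mul0r //.
    by rewrite leqNgt.
  rewrite eP /FF /cR -big_split; apply: eq_bigr => k _ /=.
  by case: (ltnP (n k) (2 ^ j)) => h /=; ring.
have hP : (rho (Gf R J P) <= r%:E)%E.
  by rewrite -hxE; exact: (Phi_ops R rho hb hri J N a n opsP (fun k hk => hJ k hk) hopsP).
have hk1 k : (k < M)%N -> (rho (Gf R J (cR k)) <= (if (2 ^ j <= n k)%N then r%:E else 0))%E.
  move=> hk; have hkN : (k < N)%N by apply: ltn_trans hMN.
  case: ifP => hc.
    have e : cR k = (fun m => \sum_(k' < N) (a k' * pass R (opsk k) (n k')) * Wv R J (n k') m).
      apply/funext => m; rewrite (bigD1 (Ordinal hkN)) //= hpassk // eqxx big1 ?addr0.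
        by rewrite /cR hc.
      move=> k' hk'; rewrite hpassk // ?ltn_ord //.
      rewrite (_ : (k' == k :> nat) = false) ?mulr0 ?mul0r //; apply/negbTE.
      by move: hk'; apply: contra => /eqP e; apply/eqP; apply: val_inj.
    by rewrite e -hxE; exact: (Phi_ops R rho hb hri J N a n (opsk k) (fun k hk => hJ k hk) (hopsk k)).
  have e : cR k = (fun=> 0) by apply/funext => m; rewrite /cR hc mulr0 mul0r.
  by rewrite e Gf0 (rho0 _ _ hb).
have hRest : (rho (Gf R J (fun m => (\sum_(k < M) cR k m)%R)) <= (L0%:R * r)%:E)%E.
  rewrite Gf_sumk; apply: (le_trans (rho_sum _ _ hb M (fun k => Gf R J (cR k)) _)).
    by move=> k; exact: measurable_Gf.
  apply: (@le_trans _ _ (\sum_(k < M) (if (2 ^ j <= n k)%N then r%:E else 0))%E).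
    by apply: lee_sum => k _; apply: hk1.
  have -> : (\sum_(k < M) (if (2 ^ j <= n k)%N then r%:E else 0%E))%E
      = ((\sum_(k < M) (2 ^ j <= n k : nat))%N%:R * r)%:E.
    rewrite natr_sum mulr_suml -sumEFin; apply: eq_bigr => k _.
    by case: ifP => _; rewrite /= ?mul1r ?mul0r.
  by rewrite lee_fin; apply: ler_wpM2r => //; rewrite ler_nat; exact: hcount.
apply: (le_trans hSM).
rewrite heq Gf_add.
apply: (le_trans (rho_add _ _ hb _ _ (measurable_Gf _ _ _) (measurable_Gf _ _ _))).
apply: (le_trans (leeD hP hRest)).
apply: (@le_trans _ _ ((1 + L0%:R) * r)%:E).
  by rewrite -EFinD lee_fin mulrDl mul1r.
rewrite EFinM; apply: lee_wpmul2l; first by rewrite lee_fin ltW.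
by rewrite -hxE.
Qed.

Theorem proposition4p2 (R : realType) (rho : (R -> R) -> \bar R)
  (q : R) (n : nat -> nat) :
  banach_function_norm rho -> rearrangement_invariant rho ->
  interpolation_L1_Linf rho ->
  1 < q -> lacunary q n ->
  exists K : R, 0 < K /\
    forall (M N : nat) (a : nat -> R), (M < N)%N ->
      (rho (fun t => (\sum_(k < M) a k * walsh (n k) t)%R)
        <= K%:E * rho (fun t => (\sum_(k < N) a k * walsh (n k) t)%R))%E.
Proof.
move=> hb hri _ hq hlac; exact: main hb hri hq hlac.
Qed.
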